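(* Let $p \ge 2$ be an integer, let $k = 2^{p-1}$, and let $M$ be the $k \times (p+1)$ model matrix of the main effect model of the $2^{p-1}$ fractional factorial design of resolution $p$ (defined in the context). Then the set $\mathcal{B}^*$ of all square-free degree $2$ moves for $M'$ is a Markov basis for $M'$; consequently, a minimal Markov basis for $M'$ can be constructed from square-free degree $2$ moves.
   Context: Cells (runs) are indexed by $\mathbf{i} = (i_1,\ldots,i_{p-1}) \in \mathcal{I} = \{0,1\}^{p-1}$, so $|\mathcal{I}| = k = 2^{p-1}$. The $2^{p-1}$ fractional factorial design of resolution $p$ for $p$ two-level factors (levels $\pm 1$) is the design with defining relation that the product of all $p$ factors equals the identity: in run $\mathbf{i}$, factor $m$ ($1 \le m \le p-1$) is at level $(-1)^{i_m}$ and factor $p$ is at level $(-1)^{i_1+\cdots+i_{p-1}}$. The model matrix $M$ of the main effect model has one row per run $\mathbf{i}$, equal to $\big(1, (-1)^{i_1}, \ldots, (-1)^{i_{p-1}}, (-1)^{i_1+\cdots+i_{p-1}}\big)$; $M'$ is its transpose. Vectors in $\mathbb{Z}^k$ are indexed by $\mathcal{I}$. A move for $M'$ is a $\mathbf{z} \in \mathbb{Z}^k$ with $M'\mathbf{z} = \mathbf{0}$ (equivalently: for every $m$ and every $a\in\{0,1\}$, $\sum_{\mathbf{i}: i_m = a} z(\mathbf{i}) = 0$, and $\sum_{\mathbf{i}: \sum_m i_m \text{ even}} z(\mathbf{i}) = \sum_{\mathbf{i}: \sum_m i_m \text{ odd}} z(\mathbf{i}) = 0$). For $\mathbf{b} \in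 \mathbb{N}^k$ ($\mathbb{N}=\{0,1,2,\ldots\}$), the fiber is $\mathcal{F}(M'\mathbf{b}) = \{\mathbf{y} \in \mathbb{N}^k : M'\mathbf{y} = M'\mathbf{b}\}$. For a set $\mathcal{B}$ of moves, let $G(\mathbf{b},\mathcal{B})$ be the graph with vertex set $\mathcal{F}(M'\mathbf{b})$ and an edge between $\mathbf{x},\mathbf{y}$ whenever $\mathbf{y} - \mathbf{x} \in \mathcal{B}$ or $\mathbf{x} - \mathbf{y} \in \mathcal{B}$. A finite set $\mathcal{B}$ of moves is a Markov basis for $M'$ if $G(\mathbf{b},\mathcal{B})$ is connected for every $\mathbf{b} \in \mathbb{N}^k$; it is minimal if no proper subset is a Markov basis. A square-free degree $2$ move is a move $\mathbf{z}$ such that for some distinct cells $\mathbf{i}_1,\mathbf{i}_2,\mathbf{i}_3,\mathbf{i}_4$, $z(\mathbf{i}_1)=z(\mathbf{i}_2)=1$, $z(\mathbf{i}_3)=z(\mathbf{i}_4)=-1$, and $z(\mathbf{i})=0$ for all other cells. *)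

(* Defs.v *)
From Stdlib Require Import Relations.
From mathcomp Require Import all_boot all_order all_algebra.
Set Implicit Arguments. Unset Strict Implicit. Unset Printing Implicit Defensive.
Import Order.TTheory GRing.Theory Num.Theory.
Local Open Scope ring_scope.

(* Cells i = (i_1,...,i_{p-1}) in {0,1}^{p-1}; bit true = 1. *)
Definition cell (p : nat) := {ffun 'I_(p.-1) -> bool}.

(* Columns of the model matrix M (p+1 of them):
   None            = intercept column (all ones),
   Some (Some m)   = factor m+1 (m : 'I_(p-1)),
   Some None       = factor p (product of the others). *)
Definition mcol (p : nat) := option (option 'I_(p.-1)).

Definition Mentry (p : nat) (i : cell p) (c : mcol p) : int :=
  match c with
  | None => 1
  | Some (Some m) => (-1) ^+ (i m)
  | Some None => (-1) ^+ (\sum_(m : 'I_(p.-1)) nat_of_bool (i m))%N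
  end.

Definition Mt (p : nat) (z : cell p -> int) (c : mcol p) : int :=
  \sum_(i : cell p) Mentry i c * z i.

Definition vec (p : nat) := {ffun cell p -> int}.
Definition nvec (p : nat) := {ffun cell p -> nat}.

Definition is_move (p : nat) (z : vec p) : Prop := forall c : mcol p, Mt z c = 0.

Definition fiber (p : nat) (b y : nvec p) : Prop :=
  forall c : mcol p, Mt (fun i => (y i)%:Z) c = Mt (fun i => (b i)%:Z) c.

Definition edge (p : nat) (B : vec p -> Prop) (b : nvec p) (x y : nvec p) : Prop :=
  fiber b x /\ fiber b y /\
  exists z : vec p, B z /\
    ((forall i, (y i)%:Z - (x i)%:Z = z i) \/ (forall i, (x i)%:Z - (y i)%:Z = z i)).

Definition fiber_connected (p : nat) (B : vec p -> Prop) (b : nvec p) : Prop :=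
  forall x y : nvec p, fiber b x -> fiber b y -> clos_refl_trans _ (edge B b) x y.

Definition markov_basis (p : nat) (B : vec p -> Prop) : Prop :=
  (exists s : seq (vec p), forall z, B z -> z \in s) /\
  (forall z, B z -> is_move z) /\
  (forall b : nvec p, fiber_connected B b).

Definition minimal_markov_basis (p : nat) (B : vec p -> Prop) : Prop :=
  markov_basis B /\
  forall B' : vec p -> Prop, (forall z, B' z -> B z) -> (exists z, B z /\ ~ B' z) ->
    ~ markov_basis B'.

Definition sqfree_deg2_move (p : nat) (z : vec p) : Prop :=
  is_move z /\
  exists i1 i2 i3 i4 : cell p,
    uniq [:: i1; i2; i3; i4] /\
    z i1 = 1 /\ z i2 = 1 /\ z i3 = -1 /\ z i4 = -1 /\
    (forall i, i \notin [:: i1; i2; i3; i4] -> z i = 0).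

(* Main.v *)
Require Import Defs.
From mathcomp Require Import all_boot all_order all_algebra.
From Stdlib Require Import Relations.
From Stdlib Require ClassicalEpsilon Classical_Prop.
From mathcomp Require Import zify.
Set Implicit Arguments. Unset Strict Implicit. Unset Printing Implicit Defensive.

Definition T n := {ffun 'I_n -> bool}.
Definition Mes n := {ffun T n -> nat}.
Definition par n (c : T n) : bool := odd (\sum_(j < n) c j).
Definition setb n (j : 'I_n) (v : bool) (c : T n) : T n :=
  [ffun i => if i == j then v else c i].

Lemma setbE n (j i : 'I_n) v c : setb j v c i = if i == j then v else c i.
Proof. by rewrite ffunE. Qed.

Lemma par_setb n (j : 'I_n) v (c : T n) : par (setb j v c) = par c (+) c j (+) v.
Proof.
rewrite /par (bigD1 j) //= [in RHS](bigD1 j) //= setbE eqxx.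
have -> : \sum_(i < n | i != j) setb j v c i = \sum_(i < n | i != j) c i.
  by apply: eq_bigr => i /negbTE ne; rewrite setbE ne.
rewrite !oddD !oddb; by case: v; case: (c j); case: (odd _).
Qed.

Lemma uniq4P (X : eqType) (a b c d : X) :
  uniq [:: a; b; c; d] <-> (a != b /\ a != c /\ a != d /\ b != c /\ b != d /\ c != d).
Proof.
rewrite /= !inE !negb_or andbT; split.
  by case/and3P=> /and3P[-> -> ->] /andP[-> ->] ->.
by case=> [-> [-> [-> [-> [-> ->]]]]].
Qed.

Definition mv n (a b c d : T n) : Prop :=
  uniq [:: a; b; c; d] /\
  (forall j, (c j = a j /\ d j = b j) \/ (c j = b j /\ d j = a j)) /\
  ((par c = par a /\ par d = par b) \/ (par c = par b /\ par d = par a)).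

Lemma mv_sym n (a b c d : T n) : mv a b c d -> mv c d a b.
Proof.
case=> u [bx pr]; split.
  case/uniq4P: u => ab [ac [ad [bc [bd cd]]]]; apply/uniq4P.
  by do !split=> //; rewrite eq_sym.
split; first by move=> j; case: (bx j) => [[-> ->]|[-> ->]]; [left|right].
by case: pr => [[-> ->]|[-> ->]]; [left|right].
Qed.

Definition upd n (x : Mes n) (a b c d : T n) : Mes n :=
  [ffun t => if (t == a) || (t == b) then (x t).-1
             else if (t == c) || (t == d) then (x t).+1 else x t].

Definition stepR n (x y : Mes n) : Prop :=
  exists a b c d, mv a b c d /\ 0 < x a /\ 0 < x b /\ y = upd x a b c d.

Lemma upd_pt n (x : Mes n) a b c d t : uniq [:: a; b; c; d] -> 0 < x a -> 0 < x b ->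
  upd x a b c d t + (t == a) + (t == b) = x t + (t == c) + (t == d).
Proof.
case/uniq4P=> ab [ac [ad [bc [bd cd]]]] xa xb.
have ab' : (a == b) = false by exact: negbTE ab.
have ba : (b == a) = false by rewrite eq_sym; exact: negbTE ab.
have ac' : (a == c) = false by exact: negbTE ac.
have ca : (c == a) = false by rewrite eq_sym; exact: negbTE ac.
have ad' : (a == d) = false by exact: negbTE ad.
have da : (d == a) = false by rewrite eq_sym; exact: negbTE ad.
have bc' : (b == c) = false by exact: negbTE bc.
have cb : (c == b) = false by rewrite eq_sym; exact: negbTE bc.
have bd' : (b == d) = false by exact: negbTE bd.
have db : (d == b) = false by rewrite eq_sym; exact: negbTE bd.
have cd' : (c == d) = false by exact: negbTE cd.
have dc : (d == c) = false by rewrite eq_sym; exact: negbTE cd.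
rewrite ffunE.
case: (eqVneq t a) => [->|ta].
  by rewrite /= ?eqxx ?ab' ?ac' ?ad' /= !addn0 addn1 prednK.
case: (eqVneq t b) => [->|tb].
  by rewrite /= ?eqxx ?ba ?bc' ?bd' /= !addn0 addn1 prednK.
case: (eqVneq t c) => [->|tc].
  by rewrite /= ?eqxx ?ca ?cb ?cd' /= !addn0 addn1.
case: (eqVneq t d) => [->|td].
  by rewrite /= ?eqxx ?da ?db ?dc /= !addn0 addn1.
by rewrite /= !addn0.
Qed.

Lemma step_sum n (x : Mes n) a b c d (F : T n -> nat) :
  uniq [:: a; b; c; d] -> 0 < x a -> 0 < x b ->
  \sum_t upd x a b c d t * F t + F a + F b = \sum_t x t * F t + F c + F d.
Proof.
move=> u xa xb.
have H : \sum_t (upd x a b c d t + (t == a) + (t == b)) * F t =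
         \sum_t (x t + (t == c) + (t == d)) * F t.
  by apply: eq_bigr => t _; rewrite upd_pt.
have E (e : T n) : \sum_t (t == e) * F t = F e.
  rewrite (bigD1 e) //= eqxx mul1n big1 ?addn0 // => t /negbTE ->; by rewrite mul0n.
move: H.
under eq_bigr do rewrite !mulnDl.
under [X in _ = X]eq_bigr do rewrite !mulnDl.
by rewrite !big_split /= !E.
Qed.

Lemma step_inv n (x : Mes n) a b c d (F : T n -> nat) :
  uniq [:: a; b; c; d] -> 0 < x a -> 0 < x b -> F a + F b = F c + F d ->
  \sum_t upd x a b c d t * F t = \sum_t x t * F t.
Proof.
move=> u xa xb e; have := step_sum F u xa xb; rewrite -!addnA e => /addIn.
by [].
Qed.

Lemma step_sym n (x y : Mes n) : stepR x y -> stepR y x.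
Proof.
case=> a [b [c [d [m [xa [xb ->]]]]]].
have u := m.1.
case/uniq4P: (u) => ab [ac [ad [bc [bd cd]]]].
exists c, d, a, b; split; first exact: mv_sym.
rewrite !ffunE (negbTE cd) eq_sym (negbTE ac) eq_sym (negbTE bc) eqxx /=.
rewrite eq_sym (negbTE ad) eq_sym (negbTE bd) eq_sym (negbTE cd) eqxx /=.
split=> //; split=> //.
apply/ffunP => t; rewrite !ffunE.
case: (eqVneq t c) => [->|tc].
  by rewrite (negbTE cd) eq_sym (negbTE ac) eq_sym (negbTE bc) /=.
case: (eqVneq t d) => [->|td] /=.
  by rewrite eq_sym (negbTE ad) eq_sym (negbTE bd) /=.
case: (eqVneq t a) => [->|ta] /=; first by rewrite prednK.
by case: (eqVneq t b) => [->|tb] /=; first by rewrite prednK.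
Qed.

Definition Reach n := @clos_refl_trans (Mes n) (@stepR n).

Lemma Reach_sym n (x y : Mes n) : Reach x y -> Reach y x.
Proof.
elim=> [u v s|u|u v w _ H1 _ H2].
- by apply: rt_step; apply: step_sym.
- exact: rt_refl.
- exact: rt_trans H2 H1.
Qed.

Definition tot n (x : Mes n) := \sum_t x t * true.
Definition bc n (j : 'I_n) (x : Mes n) := \sum_t x t * t j.
Definition od n (x : Mes n) := \sum_t x t * par t.
Definition fiberS n (x y : Mes n) :=
  tot x = tot y /\ (forall j, bc j x = bc j y) /\ od x = od y.

Lemma fiberS_sym n (x y : Mes n) : fiberS x y -> fiberS y x.
Proof. by case=> t [b o]; split=> //; split=> // j; rewrite b. Qed.

Lemma fiberS_trans n (x y z : Mes n) : fiberS x y -> fiberS y z -> fiberS x z.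
Proof.
case=> t [b o] [t' [b' o']]; split; first by rewrite t.
by split; [move=> j; rewrite b b'|rewrite o].
Qed.

Lemma fiberS_refl n (x : Mes n) : fiberS x x.
Proof. by []. Qed.

Lemma bool_box (a b c d : bool) : (c = a /\ d = b) \/ (c = b /\ d = a) ->
  (a : nat) + b = (c : nat) + d.
Proof. by case=> [[-> ->]|[-> ->]] //; rewrite addnC. Qed.

Lemma step_fiber n (x y : Mes n) : stepR x y -> fiberS x y.
Proof.
case=> a [b [c [d [[u [bx pr]] [xa [xb ->]]]]]].
split; first by rewrite /tot (step_inv u xa xb).
split.
  move=> j; rewrite /bc (step_inv u xa xb) //.
  by apply: bool_box; apply: bx.
by rewrite /od (step_inv u xa xb) //; apply: bool_box.
Qed.

Lemma Reach_fiber n (x y : Mes n) : Reach x y -> fiberS x y.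
Proof.
elim=> [u v s|u|u v w _ H1 _ H2]; first exact: step_fiber.
- exact: fiberS_refl.
- exact: fiberS_trans H1 H2.
Qed.

Lemma neq_at n (u v : T n) i : u i != v i -> u != v.
Proof. by apply: contraNneq => ->. Qed.

Lemma mv_swap n (a b : T n) (j k : 'I_n) : a j != b j -> k != j -> a k != b k ->
  par a != par b -> mv a b (setb j (b j) a) (setb j (a j) b).
Proof.
move=> abj kj abk pab.
have sj1 : setb j (b j) a j = b j by rewrite setbE eqxx.
have sj2 : setb j (a j) b j = a j by rewrite setbE eqxx.
have sk1 : setb j (b j) a k = a k by rewrite setbE (negbTE kj).
have sk2 : setb j (a j) b k = b k by rewrite setbE (negbTE kj).
split.
  apply/uniq4P; split; first exact: neq_at abk.
  split; first by apply: (@neq_at _ _ _ j); rewrite sj1.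
  split; first by apply: (@neq_at _ _ _ k); rewrite sk2.
  split; first by apply: (@neq_at _ _ _ k); rewrite sk1 eq_sym.
  split; first by apply: (@neq_at _ _ _ j); rewrite sj2 eq_sym.
  by apply: (@neq_at _ _ _ k); rewrite sk1 sk2.
split.
  move=> i; rewrite !setbE; case: (eqVneq i j) => [->|_]; [right|left]; done.
right; rewrite !par_setb.
move: abj pab; case: (a j); case: (b j); case: (par a); case: (par b) => //=.
Qed.

Lemma sum_pos (I : finType) (P : pred I) (f : I -> nat) :
  0 < \sum_(i | P i) f i -> exists i, P i /\ 0 < f i.
Proof.
case: (boolP [exists i, P i && (0 < f i)]) => [/existsP[i /andP[pi fi]]|H].
  by exists i.
rewrite big1 // => i pi; apply/eqP; rewrite -leqn0 leqNgt.
by apply: contra H => fi; apply/existsP; exists i; rewrite pi.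
Qed.

Definition Sup n (m : nat) (c : T n) := forall j : 'I_n, m <= j -> c j = false.
Definition supp n m (x : Mes n) := forall c, 0 < x c -> Sup m c.

Lemma step_supp n m (x y : Mes n) : stepR x y -> supp m x -> supp m y.
Proof.
case=> a [b [c [d [[u [bx pr]] [xa [xb ->]]]]]] sx t.
have Sa := sx a xa; have Sb := sx b xb.
rewrite ffunE.
case: ifP => [/orP[/eqP->|/eqP->] //|_].
case: ifP => [/orP[/eqP->|/eqP->] _|_ /sx //].
  by move=> j mj; case: (bx j) => [[-> _]|[-> _]]; [apply: Sa|apply: Sb].
by move=> j mj; case: (bx j) => [[_ ->]|[_ ->]]; [apply: Sb|apply: Sa].
Qed.

Lemma Reach_supp n m (x y : Mes n) : Reach x y -> supp m x -> supp m y.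
Proof.
elim=> [u v s|u|u v w _ H1 _ H2]; first exact: step_supp.
- by [].
- by move=> /H1 /H2.
Qed.

Lemma sum_pos_b n (x : Mes n) (F : T n -> bool) :
  0 < \sum_t x t * F t -> exists t, 0 < x t /\ F t.
Proof.
move=> /(@sum_pos _ predT) [t [_]]; rewrite muln_gt0 => /andP[xt Ft].
by exists t; split=> //; move: Ft; case: (F t).
Qed.

Lemma neq_ex n (u v : T n) : u != v -> exists i, u i != v i.
Proof.
case: (boolP [exists i, u i != v i]) => [/existsP[i h] _|H]; first by exists i.
case/eqP; apply/ffunP => i; apply/eqP; apply: contraNT H => h.
by apply/existsP; exists i.
Qed.

Lemma sumxD n (x : Mes n) (F G : T n -> nat) :
  \sum_t x t * (F t + G t) = \sum_t x t * F t + \sum_t x t * G t.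
Proof. by rewrite -big_split; apply: eq_bigr => t _; rewrite mulnDr. Qed.

Lemma eq_sumx n (x : Mes n) (F G : T n -> nat) :
  (forall t, F t = G t) -> \sum_t x t * F t = \sum_t x t * G t.
Proof. by move=> h; apply: eq_bigr => t _; rewrite h. Qed.

Lemma leq_sumx n (x : Mes n) (F G : T n -> nat) :
  (forall t, 0 < x t -> F t <= G t) -> \sum_t x t * F t <= \sum_t x t * G t.
Proof.
move=> h; apply: leq_sum => t _; case: (posnP (x t)) => [->|/h le] //.
by rewrite leq_mul2l le orbT.
Qed.

Definition Eg n (k : 'I_n) (c : T n) : bool := ~~ (par c (+) c k).
Definition f11 n (k : 'I_n) (c : T n) : bool := c k && Eg k c.
Definition n11 n (k : 'I_n) (x : Mes n) := \sum_t x t * f11 k t.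
Definition Ag n (k : 'I_n) (x : Mes n) := \sum_t x t * Eg k t.
Definition clr n (k : 'I_n) (c : T n) := setb k false c.

Lemma par_clr n (k : 'I_n) c : par (clr k c) = par c (+) c k.
Proof. by rewrite /clr par_setb addbF. Qed.

Lemma clr_at n (k j : 'I_n) c : j != k -> clr k c j = c j.
Proof. by move=> jk; rewrite /clr setbE (negbTE jk). Qed.

Lemma clr_k n (k : 'I_n) c : clr k c k = false.
Proof. by rewrite /clr setbE eqxx. Qed.

Lemma idA n (k : 'I_n) (x : Mes n) :
  Ag k x + od x + bc k x = tot x + n11 k x + n11 k x.
Proof.
rewrite /Ag /od /bc /tot /n11 -!sumxD; apply: eq_sumx => t.
by rewrite /f11 /Eg; case: (par t); case: (t k).
Qed.

Lemma id00 n (k : 'I_n) (x : Mes n) :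
  \sum_t x t * (~~ t k && Eg k t) + n11 k x = Ag k x.
Proof.
rewrite /Ag /n11 -!sumxD; apply: eq_sumx => t.
by rewrite /f11 /Eg; case: (par t); case: (t k).
Qed.

Lemma id01 n (k : 'I_n) (x : Mes n) :
  \sum_t x t * (~~ t k && ~~ Eg k t) + n11 k x = od x.
Proof.
rewrite /od /n11 -!sumxD; apply: eq_sumx => t.
by rewrite /f11 /Eg; case: (par t); case: (t k).
Qed.

Lemma id11 n (k : 'I_n) (x : Mes n) :
  \sum_t x t * (t k && ~~ Eg k t) + n11 k x = bc k x.
Proof.
rewrite /bc /n11 -!sumxD; apply: eq_sumx => t.
by rewrite /f11 /Eg; case: (par t); case: (t k).
Qed.

Lemma swap_f11 n (k j : 'I_n) (a b : T n) : k != j ->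
  f11 k (setb j (b j) a) = a k && ~~ (par a (+) a j (+) b j (+) a k).
Proof. by move=> kj; rewrite /f11 /Eg par_setb !setbE (negbTE kj). Qed.

Lemma xmove n (k : 'I_n) (x : Mes n) t t' : 0 < x t -> 0 < x t' -> f11 k t ->
  ~~ t' k && Eg k t' -> clr k t != clr k t' ->
  exists x', stepR x x' /\ (n11 k x').+1 = n11 k x.
Proof.
move=> xt xt' f g ne.
have [j hj] := neq_ex ne.
have jk : j != k by apply: contraNneq hj => ->; rewrite !clr_k.
have kj : k != j by rewrite eq_sym.
rewrite !clr_at // in hj.
have f' := f; have g' := g.
move: f g; rewrite /f11 /Eg => /andP[tk pt] /andP[t'k pt'].
have hk : t k != t' k by rewrite tk.
have hp : par t != par t'.
  by move: pt pt' tk t'k; case: (par t); case: (par t'); case: (t k); case: (t' k).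
have m := mv_swap hj kj hk hp.
exists (upd x t t' (setb j (t' j) t) (setb j (t j) t')); split.
  by exists t, t', (setb j (t' j) t), (setb j (t j) t').
have := step_sum (f11 k) m.1 xt xt'.
rewrite f' (negbTE (_ : ~~ f11 k t')); last by rewrite /f11 (negbTE t'k).
rewrite !swap_f11 // (negbTE t'k) /=.
move: hj pt tk; case: (t j); case: (t' j); case: (par t); case: (t k) => //= _ _ _;
  by rewrite /n11 !addn0 addn1.
Qed.

Lemma ymove n (k : 'I_n) (y : Mes n) s s' : 0 < y s -> 0 < y s' ->
  ~~ s k && ~~ Eg k s -> s' k && ~~ Eg k s' -> clr k s != clr k s' ->
  exists y', stepR y y' /\ n11 k y' = (n11 k y).+1.
Proof.
move=> ys ys' f g ne.
have [j hj] := neq_ex ne.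
have jk : j != k by apply: contraNneq hj => ->; rewrite !clr_k.
have kj : k != j by rewrite eq_sym.
rewrite !clr_at // in hj.
move: f g; rewrite /Eg !negbK => /andP[sk ps] /andP[s'k ps'].
have hk : s k != s' k by rewrite s'k (negbTE sk).
have hp : par s != par s'.
  by move: ps ps' sk s'k; case: (par s); case: (par s'); case: (s k); case: (s' k).
have m := mv_swap hj kj hk hp.
exists (upd y s s' (setb j (s' j) s) (setb j (s j) s')); split.
  by exists s, s', (setb j (s' j) s), (setb j (s j) s').
have := step_sum (f11 k) m.1 ys ys'.
rewrite !swap_f11 // /f11 /Eg.
move: hj ps ps' sk s'k; case: (s j); case: (s' j); case: (par s); case: (par s');
  case: (s k); case: (s' k) => //= _ _ _ _ _;
  by rewrite ?addn0 ?addn1 /n11 /f11 /Eg.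
Qed.

Lemma S1a n (k : 'I_n) (x y : Mes n) : fiberS x y -> n11 k y < n11 k x ->
  (exists x', stepR x x' /\ (n11 k x').+1 = n11 k x) \/
  (exists y', stepR y y' /\ n11 k y' = (n11 k y).+1).
Proof.
case=> [ht [hb ho]] hlt.
have ix := idA k x; have iy := idA k y.
have jx := id00 k x; have jy := id00 k y.
have kx := id01 k x; have ky := id01 k y.
have lx := id11 k x; have ly := id11 k y.
have hbk := hb k.
move: ix iy jx jy kx ky lx ly hbk ht ho hlt.
set Ax := Ag k x; set Ay := Ag k y; set Nx := n11 k x; set Ny := n11 k y.
set A0x := \sum_t x t * (~~ t k && Eg k t); set A0y := \sum_t y t * (~~ t k && Eg k t).
set B0x := \sum_t x t * (~~ t k && ~~ Eg k t); set B0y := \sum_t y t * (~~ t k && ~~ Eg k t).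
set C0x := \sum_t x t * (t k && ~~ Eg k t); set C0y := \sum_t y t * (t k && ~~ Eg k t).
move=> ix iy jx jy kx ky lx ly hbk ht ho hlt.
have hA : Ay < Ax by lia.
have p1 : 0 < Nx by lia.
have [t1 [xt1 f1]] := sum_pos_b p1.
have p2 : 0 < A0x by lia.
have [t2 [xt2 f2]] := sum_pos_b p2.
have p3 : 0 < B0y by lia.
have [s1 [ys1 g1]] := sum_pos_b p3.
have p4 : 0 < C0y by lia.
have [s2 [ys2 g2]] := sum_pos_b p4.
case: (boolP [exists t, [exists t', [&& 0 < x t, 0 < x t', f11 k t,
          ~~ t' k && Eg k t' & clr k t != clr k t']]]).
  case/existsP=> t /existsP[t' /and5P[a1 a2 a3 a4 a5]].
  by left; apply: xmove a1 a2 a3 a4 a5.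
move=> nx.
case: (boolP [exists s, [exists s', [&& 0 < y s, 0 < y s', ~~ s k && ~~ Eg k s,
          s' k && ~~ Eg k s' & clr k s != clr k s']]]).
  case/existsP=> t /existsP[t' /and5P[a1 a2 a3 a4 a5]].
  by right; apply: ymove a1 a2 a3 a4 a5.
move=> ny; exfalso.
have stx t t' : 0 < x t -> 0 < x t' -> f11 k t -> ~~ t' k && Eg k t' -> clr k t = clr k t'.
  move=> a1 a2 a3 a4; apply/eqP; apply: contraNT nx => a5.
  by apply/existsP; exists t; apply/existsP; exists t'; rewrite a1 a2 a3 a4 a5.
have sty s s' : 0 < y s -> 0 < y s' -> ~~ s k && ~~ Eg k s -> s' k && ~~ Eg k s' ->
    clr k s = clr k s'.
  move=> a1 a2 a3 a4; apply/eqP; apply: contraNT ny => a5.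
  by apply/existsP; exists s; apply/existsP; exists s'; rewrite a1 a2 a3 a4 a5.
have ux t : 0 < x t -> Eg k t -> clr k t = clr k t1.
  move=> xt et; case tk: (t k).
    by rewrite (stx t t2) // ?(stx t1 t2) // /f11 tk.
  by rewrite (stx t1 t) // tk.
have vy s : 0 < y s -> ~~ Eg k s -> clr k s = clr k s1.
  move=> ys es; case sk: (s k).
    by rewrite (sty s1 s) // sk.
  by rewrite (sty s s2) // ?(sty s1 s2) // sk.
have : clr k t1 != clr k s1.
  apply: contraTneq f1 => e; move: g1 => /andP[_].
  rewrite /f11 /Eg -!par_clr e; by case: (par _); rewrite ?andbF.
case/neq_ex=> j hj.
have jk : j != k by apply: contraNneq hj => ->; rewrite !clr_k.
have xj t : 0 < x t -> Eg k t -> t j = clr k t1 j.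
  by move=> xt et; rewrite -(ux t xt et) clr_at.
have yj s : 0 < y s -> ~~ Eg k s -> s j = clr k s1 j.
  by move=> ys es; rewrite -(vy s ys es) clr_at.
have hbj := hb j; move: hbj; rewrite /bc.
have e2 : clr k s1 j = ~~ clr k t1 j by move: hj; case: (clr k t1 j); case: (clr k s1 j).
case e1: (clr k t1 j); rewrite e1 /= in e2.
- have h1 : Ax <= \sum_t x t * t j.
    apply: leq_sumx => t xt; case et: (Eg k t) => //; by rewrite (xj t xt et) e1.
  have h2 : \sum_t y t * t j <= Ay.
    apply: leq_sumx => t yt; case et: (Eg k t) => //; first by case: (t j).
    by rewrite (yj t yt (negbT et)) e2.
  clear -h1 h2 hA; lia.
- have h1 : \sum_t x t * t j + Ax <= \sum_t x t * true.
    rewrite -sumxD; apply: leq_sumx => t xt; case et: (Eg k t); last by case: (t j).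
    by rewrite (xj t xt et) e1.
  have h2 : \sum_t y t * true <= \sum_t y t * t j + Ay.
    rewrite -sumxD; apply: leq_sumx => t yt; case et: (Eg k t); first by case: (t j).
    by rewrite (yj t yt (negbT et)) e2.
  move: ht; rewrite /tot => ht.
  clear -h1 h2 hA ht; lia.
Qed.

Lemma S1 n (k : 'I_n) (x y : Mes n) : fiberS x y ->
  exists x' y', Reach x x' /\ Reach y y' /\ n11 k x' = n11 k y'.
Proof.
move: {2}(n11 k x - n11 k y + (n11 k y - n11 k x)) (leqnn (n11 k x - n11 k y + (n11 k y - n11 k x))) => m.
elim: m x y => [|m IH] x y hm hf.
  exists x, y; split; first exact: rt_refl.
  split; first exact: rt_refl.
  clear -hm; lia.
have hf' := fiberS_sym hf.
case: (ltngtP (n11 k y) (n11 k x)) => hc; last first.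
- exists x, y; split; first exact: rt_refl.
  by split; first exact: rt_refl.
- case: (S1a hf' hc) => [[y' [sy ey]]|[x' [sx ex]]].
    have hf2 : fiberS x y' := fiberS_trans hf (step_fiber sy).
    have [x'' [y'' [r1 [r2 e]]]] := IH x y' (ltac:(clear -hm ey hc; lia)) hf2.
    exists x'', y''; split=> //; split=> //; exact: rt_trans (rt_step _ _ _ _ sy) r2.
  have hf2 : fiberS x' y := fiberS_trans (fiberS_sym (step_fiber sx)) hf.
  have [x'' [y'' [r1 [r2 e]]]] := IH x' y (ltac:(clear -hm ex hc; lia)) hf2.
  exists x'', y''; split=> //; exact: rt_trans (rt_step _ _ _ _ sx) r1.
- case: (S1a hf hc) => [[x' [sx ex]]|[y' [sy ey]]].
    have hf2 : fiberS x' y := fiberS_trans (fiberS_sym (step_fiber sx)) hf.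
    have [x'' [y'' [r1 [r2 e]]]] := IH x' y (ltac:(clear -hm ex hc; lia)) hf2.
    exists x'', y''; split=> //; exact: rt_trans (rt_step _ _ _ _ sx) r1.
  have hf2 : fiberS x y' := fiberS_trans hf (step_fiber sy).
  have [x'' [y'' [r1 [r2 e]]]] := IH x y' (ltac:(clear -hm ey hc; lia)) hf2.
  exists x'', y''; split=> //; split=> //; exact: rt_trans (rt_step _ _ _ _ sy) r2.
Qed.

Definition px n (k : 'I_n) (x : Mes n) : Mes n :=
  [ffun u => \sum_(t | clr k t == u) x t].

Lemma px_sum n (k : 'I_n) (x : Mes n) (G : T n -> nat) :
  \sum_u px k x u * G u = \sum_t x t * G (clr k t).
Proof.
rewrite [RHS](partition_big (clr k) predT) //=.
apply: eq_bigr => u _; rewrite ffunE big_distrl /=.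
by apply: eq_bigr => t /eqP <-.
Qed.

Lemma clr_setb n (k : 'I_n) v u : clr k (setb k v u) = clr k u.
Proof. by apply/ffunP => i; rewrite !setbE; case: (i == k). Qed.

Lemma clr_id n (k : 'I_n) (u : T n) : u k = false -> clr k u = u.
Proof. by move=> uk; apply/ffunP => i; rewrite setbE; case: eqP => // ->. Qed.

Lemma setb_clr n (k : 'I_n) (t : T n) : setb k (t k) (clr k t) = t.
Proof. by apply/ffunP => i; rewrite !setbE; case: eqP => // ->. Qed.

Lemma par_of_clr n (k : 'I_n) (a : T n) : par a = par (clr k a) (+) a k.
Proof. by rewrite par_clr -addbA addbb addbF. Qed.

Lemma neq_clr n (k : 'I_n) (u v : T n) : clr k u != clr k v -> u != v.
Proof. by apply: contraNneq => ->. Qed.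

Lemma f11_clr n (k : 'I_n) (t : T n) : f11 k t = t k && ~~ par (clr k t).
Proof. by rewrite /f11 /Eg par_clr. Qed.

Lemma px_upd n (k : 'I_n) (x : Mes n) a b c d u :
  uniq [:: a; b; c; d] -> 0 < x a -> 0 < x b ->
  px k (upd x a b c d) u + (clr k a == u) + (clr k b == u) =
  px k x u + (clr k c == u) + (clr k d == u).
Proof.
move=> un xa xb.
have E (e : T n) : \sum_(t | clr k t == u) (t == e) = (clr k e == u).
  case: (eqVneq (clr k e) u) => h.
    rewrite (bigD1 e) ?h //= eqxx big1 // => t /andP[_ /negbTE ->]; done.
  rewrite big1 // => t /eqP ht; apply/eqP; rewrite eqb0; apply: contra_neq h => te.
  by rewrite -te.
rewrite !ffunE -!E -!big_split /=.
by apply: eq_bigr => t _; rewrite upd_pt.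
Qed.

Lemma px_pos n (k : 'I_n) (x : Mes n) u : 0 < px k x u ->
  exists t, clr k t = u /\ 0 < x t.
Proof. by rewrite ffunE => /sum_pos [t [/eqP e h]]; exists t. Qed.

Lemma lift1 n (k : 'I_n) (x X Z : Mes n) : px k x = X -> stepR X Z ->
  exists x', stepR x x' /\ px k x' = Z /\ n11 k x' = n11 k x.
Proof.
move=> hX [a' [b' [c' [d' [[u [bx pr]] [Xa [Xb ->]]]]]]].
have [a [ea xa]] : exists t, clr k t = a' /\ 0 < x t by apply: px_pos; rewrite hX.
have [b [eb xb]] : exists t, clr k t = b' /\ 0 < x t by apply: px_pos; rewrite hX.
have ck : c' k = false by case: (bx k) => [[-> _]|[-> _]]; rewrite -?ea -?eb clr_k.
have dk : d' k = false by case: (bx k) => [[_ ->]|[_ ->]]; rewrite -?ea -?eb clr_k.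
set q := par c' == par a'.
set c := setb k (if q then a k else b k) c'.
set d := setb k (if q then b k else a k) d'.
have ec : clr k c = c' by rewrite /c clr_setb clr_id.
have ed : clr k d = d' by rewrite /d clr_setb clr_id.
have mvabcd : mv a b c d.
  split.
    move/uniq4P: (u) => [h1 [h2 [h3 [h4 [h5 h6]]]]].
    apply/uniq4P; rewrite -ea -eb -ec -ed in h1 h2 h3 h4 h5 h6.
    by do !split; apply: (@neq_clr _ k).
  split.
    move=> j; case: (eqVneq j k) => [->|jk].
      rewrite /c /d !setbE eqxx; case: (q); [left|right]; done.
    rewrite /c /d !setbE (negbTE jk).
    by case: (bx j); rewrite -ea -eb !clr_at //; [left|right].
  rewrite /c /d !par_setb ck dk !addbF (par_of_clr k a) (par_of_clr k b) ea eb /q.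
  case: eqP => e /=.
    left; split; first by rewrite e.
    by case: pr => [[_ ->]|[e1 e2]] //; rewrite e2 -e e1.
  right; case: pr => [[e1 _]|[e1 e2]]; first by rewrite e1 in e.
  by rewrite e1 e2.
exists (upd x a b c d); split; first by exists a, b, c, d.
split.
  apply/ffunP => w.
  have h1 := px_upd k w mvabcd.1 xa xb; rewrite ea eb ec ed hX ![_ == w]eq_sym in h1.
  have h2 := upd_pt w u Xa Xb.
  by apply: (@addIn ((w == a') + (w == b'))); rewrite !addnA h1 h2.
apply: step_inv; rewrite ?mvabcd.1 // !f11_clr ec ed ea eb /c /d !setbE eqxx /q.
case: eqP => e.
  case: pr => [[_ ->]|[e1 e2]]; first by rewrite e.
  by rewrite e2 -e e1.
case: pr => [[e1 _]|[e1 e2]]; first by rewrite e1 in e.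
by rewrite e1 e2 addnC.
Qed.


Lemma lift n (k : 'I_n) (X Y : Mes n) : Reach X Y -> forall x, px k x = X ->
  exists x', Reach x x' /\ px k x' = Y /\ n11 k x' = n11 k x.
Proof.
elim=> [u v s|u|u v w _ H1 _ H2] x hx.
- have [x' [s' [e1 e2]]] := lift1 hx s.
  by exists x'; split; [apply: rt_step|].
- by exists x; split; [apply: rt_refl|].
- have [x1 [r1 [e1 f1]]] := H1 x hx.
  have [x2 [r2 [e2 f2]]] := H2 x1 e1.
  exists x2; split; first exact: rt_trans r1 r2.
  by rewrite f2 f1.
Qed.

Lemma idP11 n (k : 'I_n) (x : Mes n) :
  \sum_t x t * (par t (+) t k) + n11 k x + n11 k x = od x + bc k x.
Proof.
rewrite /od /bc /n11 -!sumxD; apply: eq_sumx => t.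
by rewrite /f11 /Eg; case: (par t); case: (t k).
Qed.

Lemma px_fiber n (k : 'I_n) (x y : Mes n) : fiberS x y -> n11 k x = n11 k y ->
  fiberS (px k x) (px k y).
Proof.
case=> ht [hb ho] hn; split; first by rewrite /tot !px_sum.
split.
  move=> j; rewrite /bc !px_sum; case: (eqVneq j k) => [->|jk].
    by rewrite !big1 // => t _; rewrite clr_k muln0.
  rewrite (eq_bigr (fun t => x t * t j)); last by move=> t _; rewrite clr_at.
  rewrite [RHS](eq_bigr (fun t => y t * t j)); last by move=> t _; rewrite clr_at.
  exact: hb.
rewrite /od !px_sum (eq_bigr (fun t => x t * (par t (+) t k))); last by move=> t _; rewrite par_clr.
rewrite [RHS](eq_bigr (fun t => y t * (par t (+) t k))); last by move=> t _; rewrite par_clr.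
have := idP11 k x; have := idP11 k y; rewrite ho (hb k) hn => <-.
by move/addIn/addIn.
Qed.

Lemma px_supp n (k : 'I_n) m (x : Mes n) : nat_of_ord k = m -> supp m.+1 x ->
  supp m (px k x).
Proof.
move=> hk sx u /px_pos [t [<- xt]] j mj; rewrite /clr setbE.
case: eqP => // /eqP jk; apply: (sx t xt j).
by rewrite ltn_neqAle mj andbT -hk; apply: contra jk => /eqP/val_inj ->.
Qed.

Definition dst n (x y : Mes n) := \sum_t ((x t - y t) + (y t - x t)).

Lemma ltn_sum_pt (I : finType) (f g : I -> nat) (a : I) :
  (forall t, f t <= g t) -> f a < g a -> \sum_t f t < \sum_t g t.
Proof.
move=> h ha; rewrite (bigD1 a) //= [X in _ < X](bigD1 a) //=.
have h2 : \sum_(t | t != a) f t <= \sum_(t | t != a) g t by apply: leq_sum => t _; apply: h.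
have := leq_add ha h2.
by rewrite addSn.
Qed.

Lemma dst_dec n (x y : Mes n) a b c d : uniq [:: a; b; c; d] ->
  y a < x a -> y b < x b -> x c < y c -> x d < y d -> dst (upd x a b c d) y < dst x y.
Proof.
move=> u ha hb hc hd.
have xa : 0 < x a by apply: leq_ltn_trans ha.
have xb : 0 < x b by apply: leq_ltn_trans hb.
case/uniq4P: (u) => ab [ac [ad [bc [bd cd]]]].
apply: (@ltn_sum_pt _ _ _ a).
  move=> t; rewrite ffunE.
  case: (eqVneq t a) => [->|ta].
    by rewrite /= -subn1; clear -ha; lia.
  case: (eqVneq t b) => [->|tb].
    by rewrite ?eqxx ?orbT /= -subn1; clear -hb; lia.
  case: (eqVneq t c) => [->|tc].
    by rewrite ?eqxx /= ?(negbTE bc) /=; clear -hc; lia.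
  case: (eqVneq t d) => [->|td].
    by rewrite ?eqxx ?orbT /= ?(negbTE bd) /=; clear -hd; lia.
  by [].
rewrite ffunE eqxx /= -subn1; clear -ha; lia.
Qed.

Lemma mes_neq n (x y : Mes n) : x != y -> exists t, x t != y t.
Proof.
case: (boolP [exists t, x t != y t]) => [/existsP[i h] _|H]; first by exists i.
case/eqP; apply/ffunP => i; apply/eqP; apply: contraNT H => h.
by apply/existsP; exists i.
Qed.

Lemma setb_id n (k : 'I_n) (t : T n) : setb k (t k) t = t.
Proof. by apply/ffunP => i; rewrite setbE; case: eqP => // ->. Qed.

Lemma setb_setb n (k : 'I_n) v w (t : T n) : setb k v (setb k w t) = setb k v t.
Proof. by apply/ffunP => i; rewrite !setbE; case: eqP. Qed.

Lemma px_pair n (k : 'I_n) (x : Mes n) (t : T n) :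
  px k x (clr k t) = x (setb k false t) + x (setb k true t).
Proof.
rewrite ffunE (bigD1 (setb k false t)) /=; last by rewrite /clr setb_setb.
rewrite (bigD1 (setb k true t)) /=; last first.
  rewrite /clr setb_setb eqxx andTb; apply: (@neq_at _ _ _ k); by rewrite !setbE eqxx.
rewrite big1 ?addn0 // => s /andP[/andP[/eqP e n0] n1].
exfalso; move: n0 n1; rewrite -(setb_clr k s) e /clr !setb_setb.
by case: (s k); rewrite eqxx.
Qed.

Lemma sum_ind n (x : Mes n) (P : pred (T n)) :
  \sum_t x t * P t = \sum_(t | P t) x t.
Proof.
rewrite [RHS]big_mkcond; apply: eq_bigr => t _; by case: (P t); rewrite ?muln1 ?muln0.
Qed.

Lemma ex_lt n (x y : Mes n) (P : pred (T n)) t0 :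
  \sum_(t | P t) x t = \sum_(t | P t) y t -> P t0 -> y t0 < x t0 ->
  exists t, P t /\ x t < y t.
Proof.
move=> e p0 h.
case: (boolP [exists t, P t && (x t < y t)]) => [/existsP[t /andP[a b]] | H].
  by exists t.
exfalso; move: e; rewrite (bigD1 t0) //= [X in _ = X -> _](bigD1 t0) //=.
have : \sum_(i | P i && (i != t0)) y i <= \sum_(i | P i && (i != t0)) x i.
  apply: leq_sum => i /andP[pi _]; rewrite leqNgt; apply: contra H => hi.
  by apply/existsP; exists i; rewrite pi.
move: h; clear => h1 h2 e; have := leq_add h1 h2; by rewrite e addSn ltnn.
Qed.

Lemma S3move n (k : 'I_n) (x y : Mes n) (a b : T n) :
  a k = true -> b k = false -> Eg k a = Eg k b -> clr k a != clr k b ->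
  y a < x a -> y b < x b -> px k x = px k y ->
  exists x', stepR x x' /\ dst x' y < dst x y /\ px k x' = px k x /\ n11 k x' = n11 k x.
Proof.
move=> ak bk eg ne ha hb hp.
have [j hj] := neq_ex ne.
have jk : j != k by apply: contraNneq hj => ->; rewrite !clr_k.
rewrite !clr_at // in hj.
have hk : a k != b k by rewrite ak bk.
have hpar : par a != par b by move: eg; rewrite /Eg ak bk; case: (par a); case: (par b).
have m := mv_swap hk jk hj hpar.
rewrite ak bk in m.
set c := setb k false a in m *; set d := setb k true b in m *.
have xa : 0 < x a by apply: leq_ltn_trans ha.
have xb : 0 < x b by apply: leq_ltn_trans hb.
have hc : x c < y c.
  have := px_pair k x a; have := px_pair k y a; rewrite hp => ->.
  have sa : setb k true a = a by rewrite -[true]ak setb_id.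
  rewrite -/c sa => e; move: e ha; clear; lia.
have hd : x d < y d.
  have := px_pair k x b; have := px_pair k y b; rewrite hp => ->.
  have sb : setb k false b = b by rewrite -[false]bk setb_id.
  rewrite -/d sb => e; move: e hb; clear; lia.
exists (upd x a b c d); split; first by exists a, b, c, d.
split; first exact: dst_dec m.1 ha hb hc hd.
split.
  apply/ffunP => w.
  have h1 := px_upd k w m.1 xa xb.
  rewrite /c /d !clr_setb in h1.
  by move: h1 => /addIn /addIn.
apply: step_inv; rewrite ?m.1 // !f11_clr /c /d !setbE eqxx ak bk !clr_setb /=.
by move: eg; rewrite /Eg -!par_clr => ->; rewrite addnC.
Qed.

Lemma Eg_clr n (k : 'I_n) (w : T n) : Eg k w = ~~ par (clr k w).
Proof. by rewrite /Eg par_clr. Qed.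

Lemma S3step n (k : 'I_n) (x y : Mes n) : x != y -> px k x = px k y ->
  n11 k x = n11 k y -> bc k x = bc k y ->
  exists x', stepR x x' /\ dst x' y < dst x y /\ px k x' = px k y /\
    n11 k x' = n11 k y /\ bc k x' = bc k y.
Proof.
move=> ne hp hn hb.
have [t ht] := mes_neq ne.
set t1 := setb k true t; set t0 := setb k false t.
have e01 : x t0 + x t1 = y t0 + y t1 by rewrite -!px_pair hp.
have n1 : x t1 != y t1.
  apply: contra ht => /eqP e; move: e01; rewrite e => /addIn e0.
  by rewrite -(setb_id k t); case: (t k); rewrite -/t0 -/t1 ?e ?e0.
set G := Eg k t1.
set P := fun u : T n => u k && (Eg k u == G).
have hP : \sum_(u | P u) x u = \sum_(u | P u) y u.
  rewrite -!sum_ind /P; case: (G).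
    rewrite (eq_bigr (fun u => x u * (u k && Eg k u))); last by move=> u _; rewrite eqb_id.
    rewrite [RHS](eq_bigr (fun u => y u * (u k && Eg k u))); last by move=> u _; rewrite eqb_id.
    exact: hn.
  have := id11 k x; have := id11 k y; rewrite hn hb => <-.
  move/addIn => e.
  rewrite (eq_bigr (fun u => x u * (u k && ~~ Eg k u))); last by move=> u _; rewrite eqbF_neg.
  rewrite [RHS](eq_bigr (fun u => y u * (u k && ~~ Eg k u))); last by move=> u _; rewrite eqbF_neg.
  by rewrite e.
have Pt1 : P t1 by rewrite /P /t1 setbE eqxx eqxx.
have Et0 : Eg k t0 = G by rewrite /G !Eg_clr /t0 /t1 !clr_setb.
have fin : forall a b : T n, a k = true -> b k = false -> Eg k a = Eg k b ->
    clr k a != clr k b -> y a < x a -> y b < x b ->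
    exists x', stepR x x' /\ dst x' y < dst x y /\ px k x' = px k y /\
      n11 k x' = n11 k y /\ bc k x' = bc k y.
  move=> a b ak bk eg ne' ha hb'.
  have [x' [s [d [p1 p2]]]] := S3move ak bk eg ne' ha hb' hp.
  exists x'; split=> //; split=> //; split; first by rewrite p1.
  split; first by rewrite p2.
  by have [_ [hbx _]] := step_fiber s; rewrite -hbx.
have clr_eq (u : T n) : u k = true -> clr k u = clr k t -> u = t1.
  by move=> uk e; rewrite -(setb_clr k u) e uk /t1 /clr setb_setb.
case: (ltngtP (x t1) (y t1)) => h; last by rewrite h eqxx in n1.
- have [u [pu hu]] := ex_lt (esym hP) Pt1 h.
  move: pu; rewrite /P => /andP[uk /eqP eu].
  have h0 : y t0 < x t0 by move: e01 h; clear; lia.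
  apply: (fin u t0) => //.
  + by rewrite /t0 setbE eqxx.
  + by rewrite Et0.
  + rewrite /t0 clr_setb; apply/eqP => e; move: (clr_eq u uk e) hu h => ->.
    by move=> /ltnW; rewrite leqNgt => /negP.
- have [u [pu hu]] := ex_lt hP Pt1 h.
  move: pu; rewrite /P => /andP[uk /eqP eu].
  have su : setb k true u = u by rewrite -[true]uk setb_id.
  have eu2 : x (setb k false u) + x u = y (setb k false u) + y u.
    by have := px_pair k x u; have := px_pair k y u; rewrite hp su => e1 e2; rewrite -e2 e1.
  have h0 : y (setb k false u) < x (setb k false u) by move: eu2 hu; clear; lia.
  apply: (fin t1 (setb k false u)) => //.
  + by rewrite /t1 setbE eqxx.
  + by rewrite setbE eqxx.
  + by rewrite !Eg_clr clr_setb -!Eg_clr eu.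
  + rewrite clr_setb /t1 clr_setb; apply/eqP => e; move: (clr_eq u uk (esym e)) hu h => ->.
    by move=> /ltnW; rewrite leqNgt => /negP.
Qed.

Lemma S3 n (k : 'I_n) (x y : Mes n) : px k x = px k y ->
  n11 k x = n11 k y -> bc k x = bc k y -> Reach x y.
Proof.
move: {2}(dst x y) (leqnn (dst x y)) => m.
elim: m x => [|m IH] x hm hp hn hb; case: (eqVneq x y) => [->|ne]; try exact: rt_refl.
  have [x' [_ [hd _]]] := S3step ne hp hn hb.
  by move: hm hd; clear; lia.
have [x' [s [hd [p1 [p2 p3]]]]] := S3step ne hp hn hb.
apply: rt_trans (rt_step _ _ _ _ s) (IH x' _ p1 p2 p3).
by move: hm hd; clear; lia.
Qed.

Lemma Core n m : m <= n -> forall x y : Mes n, supp m x -> supp m y ->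
  fiberS x y -> Reach x y.
Proof.
elim: m => [|m IH] hmn x y sx sy hf.
  have z0 (t : T n) (u : Mes n) : supp 0 u -> 0 < u t -> t = [ffun _ => false].
    by move=> su ut; apply/ffunP => j; rewrite ffunE; apply: (su t ut j).
  have tz (u : Mes n) : supp 0 u -> tot u = u [ffun _ => false].
    move=> su; rewrite /tot (bigD1 [ffun _ => false]) //= muln1 big1 ?addn0 // => t nt.
    apply/eqP; rewrite muln1 -leqn0 leqNgt; apply: contra nt => ut.
    by rewrite (z0 t u su ut).
  have -> : x = y.
    apply/ffunP => t; case: (eqVneq t [ffun _ => false]) => [->|nt].
      by rewrite -(tz x sx) -(tz y sy) hf.1.
    have h (u : Mes n) : supp 0 u -> u t = 0.
      move=> su; apply/eqP; rewrite -leqn0 leqNgt; apply: contra nt => ut.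
      by rewrite (z0 t u su ut).
    by rewrite (h x sx) (h y sy).
  exact: rt_refl.
have ltmn : m < n by [].
set k := Ordinal ltmn.
have [x1 [y1 [r1 [r2 e]]]] := S1 k hf.
have hf1 : fiberS x1 y1.
  apply: fiberS_trans (fiberS_sym (Reach_fiber r1)) _.
  exact: fiberS_trans hf (Reach_fiber r2).
have sx1 := Reach_supp r1 sx; have sy1 := Reach_supp r2 sy.
have hp := px_fiber hf1 e.
have Rp := IH (ltnW hmn) _ _ (@px_supp _ k m _ (erefl _) sx1) (@px_supp _ k m _ (erefl _) sy1) hp.
have [x2 [r3 [e3 f3]]] := lift Rp (erefl _).
have hb : bc k x2 = bc k y1.
  by have [_ [hb1 _]] := Reach_fiber r3; rewrite -hb1; exact: hf1.2.1.
have r4 := S3 e3 (etrans f3 e) hb.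
apply: rt_trans r1 _; apply: rt_trans r3 _; apply: rt_trans r4 _.
exact: Reach_sym r2.
Qed.

Lemma CoreAll n (x y : Mes n) : fiberS x y -> Reach x y.
Proof.
apply: (@Core n n (leqnn n)) => c _ j hj; by move: (ltn_ord j); rewrite ltnNge hj.
Qed.

Import GRing.Theory Num.Theory.
Local Open Scope ring_scope.

Lemma sgn_b (b : bool) (v : nat) :
  (-1) ^+ (nat_of_bool b) * (v%:Z) = v%:Z - 2 * ((b * v)%N)%:Z.
Proof. by case: b; rewrite ?expr1 ?expr0 ?mul1n ?mul0n ?mulN1r ?mul1r //= ?subr0; lia. Qed.

Lemma Mt_None p (x : nvec p) : Mt (fun i => (x i)%:Z) None = (tot x)%:Z.
Proof.
rewrite /Mt /tot -natz natr_sum; apply: eq_bigr => i _ /=.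
by rewrite mul1r muln1 natz.
Qed.

Lemma Mt_Some p (x : nvec p) m :
  Mt (fun i => (x i)%:Z) (Some (Some m)) = (tot x)%:Z - 2 * (bc m x)%:Z.
Proof.
rewrite /Mt /tot /bc -!natz !natr_sum mulr_sumr -sumrB; apply: eq_bigr => i _ /=.
by rewrite sgn_b muln1 mulnC !natz.
Qed.

Lemma Mt_Par p (x : nvec p) :
  Mt (fun i => (x i)%:Z) (Some None) = (tot x)%:Z - 2 * (od x)%:Z.
Proof.
rewrite /Mt /tot /od -!natz !natr_sum mulr_sumr -sumrB; apply: eq_bigr => i _ /=.
by rewrite -signr_odd sgn_b muln1 mulnC !natz.
Qed.

Lemma fiber_S p (b x y : nvec p) : fiber b x -> fiber b y -> @fiberS p.-1 x y.
Proof.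
move=> hx hy.
have e c : Mt (fun i => (x i)%:Z) c = Mt (fun i => (y i)%:Z) c by rewrite hx hy.
have et : tot x = tot y by have := e None; rewrite !Mt_None => -[].
split=> //; split.
  move=> j; have := e (Some (Some j)); rewrite !Mt_Some et => /addrI /eqP.
  by rewrite eqr_opp => /eqP; lia.
have := e (Some None); rewrite !Mt_Par et => /addrI /eqP.
by rewrite eqr_opp => /eqP; lia.
Qed.

Lemma S_fiber p (b x y : nvec p) : fiber b x -> @fiberS p.-1 x y -> fiber b y.
Proof.
move=> hx [ht [hb ho]] c; rewrite -hx; case: c => [[m|]|].
- by rewrite !Mt_Some ht hb.
- by rewrite !Mt_Par ht ho.
- by rewrite !Mt_None ht.
Qed.

Definition mkz p (c d a b : cell p) : vec p :=
  [ffun i => ((i == c) + (i == d))%:Z - ((i == a) + (i == b))%:Z].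

Lemma sum_delta p (F : cell p -> int) (e : cell p) :
  \sum_i F i * ((i == e) : nat)%:Z = F e.
Proof.
rewrite (bigD1 e) //= eqxx mulr1 big1 ?addr0 // => i /negbTE ->; by rewrite mulr0.
Qed.

Lemma Mt_mkz p (c d a b : cell p) col :
  Mt (mkz c d a b) col = Mentry c col + Mentry d col - (Mentry a col + Mentry b col).
Proof.
rewrite /Mt.
rewrite (eq_bigr (fun i => Mentry i col * ((i == c) : nat)%:Z + Mentry i col * ((i == d) : nat)%:Z
   - (Mentry i col * ((i == a) : nat)%:Z + Mentry i col * ((i == b) : nat)%:Z))); last first.
  by move=> i _; rewrite ffunE !PoszD mulrBr !mulrDr.
by rewrite sumrB !big_split /= !sum_delta.
Qed.

Lemma Mentry_par p (i : cell p) : Mentry i (Some None) = (-1) ^+ (nat_of_bool (@par p.-1 i)).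
Proof. by rewrite /= -signr_odd. Qed.

Lemma mv_move p (a b c d : cell p) : @mv p.-1 a b c d -> sqfree_deg2_move (mkz c d a b).
Proof.
case=> u [bx pr]; split.
  move=> col; rewrite Mt_mkz; apply/eqP; rewrite subr_eq0; apply/eqP.
  case: col => [[m|]|] //.
    by rewrite /=; case: (bx m) => [[-> ->]|[-> ->]] //; rewrite addrC.
  rewrite !Mentry_par.
  by case: pr => [[-> ->]|[-> ->]] //; rewrite addrC.
move/uniq4P: (u) => [ab [ac [ad [bc [bd cd]]]]].
exists c, d, a, b; split.
  apply/uniq4P; do !split=> //; by rewrite eq_sym.
have ne (i j : cell p) : i != j -> (i == j) = false by move/negbTE.
have ne' (i j : cell p) : j != i -> (i == j) = false by rewrite eq_sym; move/negbTE.
split; first by rewrite ffunE eqxx (ne _ _ cd) (ne' _ _ ac) (ne' _ _ bc).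
split; first by rewrite ffunE eqxx (ne' _ _ cd) (ne' _ _ ad) (ne' _ _ bd).
split; first by rewrite ffunE eqxx (ne _ _ ac) (ne _ _ ad) (ne _ _ ab).
split; first by rewrite ffunE eqxx (ne _ _ bc) (ne _ _ bd) (ne' _ _ ab).
move=> i; rewrite !inE !negb_or ffunE => /and4P[/negbTE -> /negbTE -> /negbTE -> /negbTE ->].
by [].
Qed.

Lemma step_edge p (b x y : nvec p) : fiber b x -> @stepR p.-1 x y ->
  edge (@sqfree_deg2_move p) b x y.
Proof.
move=> hx st; have hy := S_fiber hx (step_fiber st).
move: st => [a1 [b1 [c1 [d1 [m [xa [xb ey]]]]]]].
split=> //; split=> //.
exists (mkz c1 d1 a1 b1); split; first exact: mv_move.
left=> i; rewrite ffunE ey.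
have := upd_pt i m.1 xa xb.
move: (upd x a1 b1 c1 d1 i) (x i) (i == a1) (i == b1) (i == c1) (i == d1) => u v e1 e2 e3 e4.
move=> h; apply/eqP; rewrite subr_eq addrAC eq_sym subr_eq -!PoszD; apply/eqP; congr Posz.
by move: h; clear; lia.
Qed.

Lemma Reach_edge p (b x y : nvec p) : @Reach p.-1 x y -> fiber b x ->
  clos_refl_trans _ (edge (@sqfree_deg2_move p) b) x y.
Proof.
elim=> [u v s|u|u v w r1 H1 r2 H2] hu.
- by apply: rt_step; apply: step_edge.
- exact: rt_refl.
- apply: rt_trans (H1 hu) (H2 _).
  exact: S_fiber hu (Reach_fiber r1).
Qed.

Definition allz p : seq (vec p) :=
  [seq mkz q.1.1.1 q.1.1.2 q.1.2 q.2 | q : ((cell p * cell p) * cell p) * cell p].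

Lemma sq_in p (z : vec p) : sqfree_deg2_move z -> z \in allz p.
Proof.
case=> _ [i1 [i2 [i3 [i4 [u [h1 [h2 [h3 [h4 h0]]]]]]]]].
have -> : z = mkz i1 i2 i3 i4.
  move/uniq4P: (u) => [ab [ac [ad [bc [bd cd]]]]].
  have ne (i j : cell p) : i != j -> (i == j) = false by move/negbTE.
  have ne' (i j : cell p) : j != i -> (i == j) = false by rewrite eq_sym; move/negbTE.
  apply/ffunP => i; rewrite ffunE.
  case: (boolP (i \in [:: i1; i2; i3; i4])) => hi; last first.
    rewrite h0 //; move: hi; rewrite !inE !negb_or.
    by case/and4P=> /negbTE -> /negbTE -> /negbTE -> /negbTE ->.
  move: hi; rewrite !inE => /or4P[] /eqP ->.
  - by rewrite h1 eqxx (ne _ _ ab) (ne _ _ ac) (ne _ _ ad).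
  - by rewrite h2 eqxx (ne' _ _ ab) (ne _ _ bc) (ne _ _ bd).
  - by rewrite h3 eqxx (ne' _ _ ac) (ne' _ _ bc) (ne _ _ cd).
  - by rewrite h4 eqxx (ne' _ _ ad) (ne' _ _ bd) (ne' _ _ cd).
exact: (image_f (fun q : ((cell p * cell p) * cell p) * cell p =>
          mkz q.1.1.1 q.1.1.2 q.1.2 q.2) (x := (i1, i2, i3, i4))).
Qed.

Local Open Scope nat_scope.

Definition decP (P : Prop) : bool :=
  if ClassicalEpsilon.excluded_middle_informative P then true else false.

Lemma decPE (P : Prop) : decP P = true <-> P.
Proof. by rewrite /decP; case: ClassicalEpsilon.excluded_middle_informative. Qed.

Lemma count_le (V : eqType) (s : seq V) (p q : pred V) :
  (forall z, z \in s -> p z -> q z) -> count p s <= count q s.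
Proof.
elim: s => //= a s IH h.
apply: leq_add; last by apply: IH => z zs; apply: h; rewrite inE zs orbT.
by case pa: (p a) => //; rewrite (h a) ?inE ?eqxx.
Qed.

Lemma count_lt (V : eqType) (s : seq V) (p q : pred V) :
  (forall z, z \in s -> p z -> q z) -> (exists z, z \in s /\ q z /\ ~~ p z) ->
  count p s < count q s.
Proof.
elim: s => [|a s IH] h [z [zs [qz pz]]] //=.
have h' : forall z, z \in s -> p z -> q z by move=> w ws; apply: h; rewrite inE ws orbT.
move: (zs); rewrite inE => /orP[/eqP e|zs'].
  rewrite -e (negbTE pz) qz add0n add1n ltnS; exact: count_le.
have := IH h' (ex_intro _ z (conj zs' (conj qz pz))).
have : (p a : nat) <= q a by case pa: (p a) => //; rewrite (h a) ?inE ?eqxx.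
move=> h1 h2; have := leq_add h1 h2; by rewrite addnS.
Qed.

Lemma step_down p (B0 B : vec p -> Prop) (s : seq (vec p)) :
  (forall z, B0 z -> z \in s) -> (forall z, B z -> B0 z) -> markov_basis B ->
  ~ minimal_markov_basis B ->
  exists B' : vec p -> Prop, (forall z, B' z -> B z) /\ markov_basis B' /\
    count (fun z => decP (B' z)) s < count (fun z => decP (B z)) s.
Proof.
move=> hs hB mB nm.
have [B' [h1 [[z [bz nbz]] m']]] : exists B' : vec p -> Prop, (forall z, B' z -> B z) /\
       (exists z, B z /\ ~ B' z) /\ markov_basis B'.
  apply: Classical_Prop.NNPP => H; apply: nm; split=> // B' h1 h2 m'.
  by apply: H; exists B'; split=> //; split.
exists B'; split=> //; split=> //.
apply: count_lt.
  by move=> w _ /decPE /h1 /decPE.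
exists z; split; first by apply: hs; apply: hB.
split; first by apply/decPE.
by apply/negP => /decPE.
Qed.

Lemma minimal_exists p (B0 : vec p -> Prop) (s : seq (vec p)) :
  (forall z, B0 z -> z \in s) -> markov_basis B0 ->
  exists B, (forall z, B z -> B0 z) /\ minimal_markov_basis B.
Proof.
move=> hs mb.
suff key : forall N (B : vec p -> Prop), (forall z, B z -> B0 z) -> markov_basis B ->
    count (fun z => decP (B z)) s <= N ->
    exists B', (forall z, B' z -> B0 z) /\ minimal_markov_basis B'.
  exact: (key _ B0 (fun z h => h) mb (leqnn _)).
elim=> [|N IH] B hB mB hc;
  case: (Classical_Prop.classic (minimal_markov_basis B)) => [mm|nm]; try by exists B.
  have [B' [_ [_ lt]]] := step_down hs hB mB nm.
  by move: hc lt; clear; lia.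
have [B' [h1 [m' lt]]] := step_down hs hB mB nm.
apply: (IH B') => //; first by move=> w /h1 /hB.
by move: hc lt; clear; lia.
Qed.

Theorem theorem1 (p : nat) (hp : (2 <= p)%N) :
  markov_basis (@sqfree_deg2_move p) /\
  exists B : vec p -> Prop,
    (forall z, B z -> sqfree_deg2_move z) /\ minimal_markov_basis B.
Proof.
have MB : markov_basis (@sqfree_deg2_move p).
  split; first by exists (allz p); apply: sq_in.
  split; first by move=> z [].
  move=> b x y hx hy; exact: (Reach_edge (CoreAll (fiber_S hx hy)) hx).
split=> //; exact: minimal_exists (@sq_in p) MB.
Qed.
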